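(* Let $k\ge 2$ and let $\mathbf{x}_1,\ldots,\mathbf{x}_k$ be norm one vectors in a real Hilbert space $\mathcal H$ with $\dim(\operatorname{span}\{\mathbf{x}_1,\ldots,\mathbf{x}_k\})=2$. If $S,T\in\mathcal L_s(^k\mathcal H)$ have norm one and $S(\mathbf{x}_1,\ldots,\mathbf{x}_k)=T(\mathbf{x}_1,\ldots,\mathbf{x}_k)=1$, then, setting $\mathcal H_1=\operatorname{span}\{\mathbf{x}_1,\ldots,\mathbf{x}_k\}$, the restrictions of $S$ and $T$ to $\mathcal H_1\times\cdots\times\mathcal H_1$ coincide.
   Context: $\mathcal L_s(^k\mathcal H)$ is the Banach space of continuous symmetric real-valued $k$-linear forms on $\mathcal H$ with norm $\|T\|=\sup\{|T(\mathbf{w}_1,\ldots,\mathbf{w}_k)|:\|\mathbf{w}_i\|\le1\}$. *)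

(* Defs.v *)
From HB Require Import structures.
From mathcomp Require Import all_boot all_order all_algebra all_fingroup.
From mathcomp Require Import all_classical all_reals all_analysis.
Set Implicit Arguments. Unset Strict Implicit. Unset Printing Implicit Defensive.
Import Order.TTheory GRing.Theory Num.Theory.
Import numFieldNormedType.Exports.
Local Open Scope classical_set_scope.
Local Open Scope ring_scope.

(* A real Hilbert space is a complete normed space H over R together with an
   inner product ip (symmetric, bilinear, positive definite) inducing the norm. *)
Definition is_inner_product (R : realType) (H : normedModType R)
  (ip : H -> H -> R) : Prop :=
  [/\ (forall x y, ip x y = ip y x),
      (forall a x y z, ip (a *: x + y) z = a * ip x z + ip y z),
      (forall x, ip x x = `|x| ^+ 2) &
      (forall x, ip x x = 0 -> x = 0)].

Definition span_fam (R : realType) (H : normedModType R) (k : nat)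
  (x : 'I_k -> H) : set H :=
  [set v | exists c : 'I_k -> R, v = \sum_(i < k) c i *: x i].

Definition dim_eq2 (R : realType) (H : normedModType R) (V : set H) : Prop :=
  exists u v : H,
    (forall a b : R, a *: u + b *: v = 0 -> a = 0 /\ b = 0) /\
    V = [set w | exists a b : R, w = a *: u + b *: v].

Definition upd (H : Type) (k : nat) (w : 'I_k -> H) (i : 'I_k) (u : H) :
  'I_k -> H := fun j => if j == i then u else w j.

Definition multilinear (R : realType) (H : normedModType R) (k : nat)
  (T : ('I_k -> H) -> R) : Prop :=
  forall (w : 'I_k -> H) (i : 'I_k) (a : R) (u v : H),
    T (upd w i (a *: u + v)) = a * T (upd w i u) + T (upd w i v).

Definition symmetric_form (R : realType) (H : normedModType R) (k : nat)
  (T : ('I_k -> H) -> R) : Prop :=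
  forall (s : 'S_k) (w : 'I_k -> H), T (fun j => w (s j)) = T w.

(* continuity of a k-linear form, in its standard bounded form *)
Definition bounded_form (R : realType) (H : normedModType R) (k : nat)
  (T : ('I_k -> H) -> R) : Prop :=
  exists C : R, forall w : 'I_k -> H, `|T w| <= C * \prod_(i < k) `|w i|.

Definition Ls (R : realType) (H : normedModType R) (k : nat)
  (T : ('I_k -> H) -> R) : Prop :=
  [/\ multilinear T, symmetric_form T & bounded_form T].

Definition form_norm (R : realType) (H : normedModType R) (k : nat)
  (T : ('I_k -> H) -> R) : R :=
  sup [set `|T w| | w in [set w : 'I_k -> H | forall i, `|w i| <= 1]].

(* Main.v *)
Require Import Defs.
From HB Require Import structures.
From mathcomp Require Import all_boot all_order all_algebra all_fingroup.
From mathcomp Require Import all_classical all_reals all_analysis.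
From mathcomp Require Import ring lra.
Import Order.TTheory GRing.Theory Num.Theory.
Import numFieldNormedType.Exports.
Local Open Scope classical_set_scope.
Local Open Scope ring_scope.
Set Implicit Arguments. Unset Strict Implicit.
Lemma upd_id (H : Type) k (w : 'I_k -> H) i : upd w i (w i) = w.
Proof. by apply: funext => j; rewrite /upd; case: eqP => // ->. Qed.

Lemma upd_same (H : Type) k (w : 'I_k -> H) i u v : upd (upd w i u) i v = upd w i v.
Proof. by apply: funext => j; rewrite /upd; case: eqP. Qed.

Lemma upd_comm (H : Type) k (w : 'I_k -> H) i j u v : i != j ->
  upd (upd w i u) j v = upd (upd w j v) i u.
Proof.
move=> ij; apply: funext => l; rewrite /upd.
have [li|li] := eqVneq l i; have [lj|lj] := eqVneq l j => //.
by move: ij; rewrite -li -lj eqxx.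
Qed.

Lemma upd_eq (H : Type) k (w : 'I_k -> H) i u : upd w i u i = u.
Proof. by rewrite /upd eqxx. Qed.

Lemma upd_neq (H : Type) k (w : 'I_k -> H) i u j : j != i -> upd w i u j = w j.
Proof. by rewrite /upd => /negbTE ->. Qed.

Lemma ml0 (R : realType) (H : normedModType R) k (S : ('I_k -> H) -> R) :
  Defs.multilinear S -> forall w i, S (upd w i 0) = 0.
Proof.
move=> hS w i; have := hS w i (-1) 0 0.
by rewrite scaler0 addr0 mulN1r addNr.
Qed.

Lemma mlZ (R : realType) (H : normedModType R) k (S : ('I_k -> H) -> R) :
  Defs.multilinear S -> forall w i a u, S (upd w i (a *: u)) = a * S (upd w i u).
Proof.
move=> hS w i a u; have := hS w i a u 0.
by rewrite addr0 ml0 // addr0.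
Qed.

Lemma mlD (R : realType) (H : normedModType R) k (S : ('I_k -> H) -> R) :
  Defs.multilinear S -> forall w i u v, S (upd w i (u + v)) = S (upd w i u) + S (upd w i v).
Proof.
move=> hS w i u v; have := hS w i 1 u v.
by rewrite scale1r mul1r.
Qed.

Definition good (R : realType) (H : normedModType R) k (S : ('I_k -> H) -> R) :=
  Defs.multilinear S /\ Defs.symmetric_form S /\
     (forall w : 'I_k -> H, (forall i, `|w i| <= 1) -> `|S w| <= 1).



Lemma good_of (R : realType) (H : normedModType R) k (S : ('I_k -> H) -> R) :
  Ls S -> form_norm S = 1 -> good S.
Proof.
case=> ml sy [C hC] nS; split => //; split => // w hw.
rewrite -nS; apply: ub_le_sup; last by exists w.
exists (Num.max C 0) => _ [v hv <-].
apply: (le_trans (hC v)).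
have h1 : \prod_(i < k) `|v i| <= 1.
  by apply: prodr_ile1 => i _; rewrite normr_ge0 hv.
have h0 : 0 <= \prod_(i < k) `|v i| by apply: prodr_ge0 => i _.
case: (lerP C 0) => hC0.
  by rewrite mulr_le0_ge0.
by rewrite -{2}[C]mulr1; apply: ler_wpM2l => //; rewrite ltW.
Qed.

Lemma ip0l (R : realType) (H : normedModType R) (ip : H -> H -> R) :
  is_inner_product ip -> forall z, ip 0 z = 0.
Proof.
case=> _ hl _ _ z; have := hl (-1) 0 0 z.
by rewrite scaler0 addr0 mulN1r addNr.
Qed.

Lemma ipZl (R : realType) (H : normedModType R) (ip : H -> H -> R) :
  is_inner_product ip -> forall a x z, ip (a *: x) z = a * ip x z.
Proof.
move=> hip a x z; have := ip0l hip z; case: hip => _ hl _ _.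
by have := hl a x 0 z; rewrite addr0 => -> ->; rewrite addr0.
Qed.

Lemma ipDl (R : realType) (H : normedModType R) (ip : H -> H -> R) :
  is_inner_product ip -> forall x y z, ip (x + y) z = ip x z + ip y z.
Proof.
case=> _ hl _ _ x y z; have := hl 1 x y z.
by rewrite scale1r mul1r.
Qed.

Lemma ipC (R : realType) (H : normedModType R) (ip : H -> H -> R) :
  is_inner_product ip -> forall x y, ip x y = ip y x.
Proof. by case. Qed.

Lemma ipZr (R : realType) (H : normedModType R) (ip : H -> H -> R) :
  is_inner_product ip -> forall a x z, ip z (a *: x) = a * ip z x.
Proof. by move=> hip a x z; rewrite (ipC hip) (ipZl hip) (ipC hip x). Qed.

Lemma ipDr (R : realType) (H : normedModType R) (ip : H -> H -> R) :
  is_inner_product ip -> forall x y z, ip z (x + y) = ip z x + ip z y.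
Proof. by move=> hip x y z; rewrite (ipC hip) (ipDl hip) (ipC hip x) (ipC hip y). Qed.

Lemma ipxx (R : realType) (H : normedModType R) (ip : H -> H -> R) :
  is_inner_product ip -> forall x, ip x x = `|x| ^+ 2.
Proof. by case. Qed.

Lemma goodA7 (R : realType) (H : normedModType R) k (S : ('I_k -> H) -> R) :
  good S -> forall y, (forall i, `|y i| <= 1) -> forall a v,
  `|S (upd y a v)| <= `|v|.
Proof.
case=> ml [sy bd] y hy a v.
have [->|v0] := eqVneq v 0; first by rewrite (ml0 ml) !normr0.
have nv : `|v| != 0 by rewrite normr_eq0.
have e : v = `|v| *: (`|v|^-1 *: v) by rewrite scalerA divff // scale1r.
rewrite {1}e (mlZ ml) normrM normr_id; apply: ler_piMr => //.
apply: bd => j; rewrite /upd; case: eqP => _ //.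
by rewrite normrZ normrV ?unitfE // normr_id mulVf.
Qed.

Lemma Flem (R : realType) (H : normedModType R) (ip : H -> H -> R) k
  (S : ('I_k -> H) -> R) : is_inner_product ip -> good S ->
  forall y, (forall i, `|y i| = 1) -> S y = 1 -> forall a v,
  S (upd y a v) = ip (y a) v.
Proof.
move=> hip gS y hy Sy a v.
have ml := gS.1.
have hy' : forall i, `|y i| <= 1 by move=> i; rewrite hy.
set f := S (upd y a v); set c := ip (y a) v.
set g := `|v| ^+ 2.
have key : forall t, 2 * t * (f - c) + t ^+ 2 * (f ^+ 2 - g) <= 0.
  move=> t.
  have h1 := goodA7 gS hy' a (y a + t *: v).
  rewrite mlD // upd_id Sy mlZ // -/f in h1.
  have h2 : (1 + t * f) ^+ 2 <= `|y a + t *: v| ^+ 2.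
    rewrite -(real_normK (num_real (1 + t * f))).
    have := normr_ge0 (1 + t * f); nra.
  have h3 : `|y a + t *: v| ^+ 2 = 1 + 2 * t * c + t ^+ 2 * g.
    rewrite -(ipxx hip) (ipDl hip) !(ipDr hip) !(ipZl hip) !(ipZr hip).
    rewrite (ipxx hip (y a)) hy (ipC hip v) (ipxx hip v) -/c -/g; ring.
  rewrite h3 in h2; nra.
set d := f - c; set q := f ^+ 2 - g.
set M := 1 + `|q|.
have hM : 0 < M by rewrite /M; have := normr_ge0 q; lra.
have hq : - (M - 1) <= q by rewrite /M; have := ler_norm (- q); rewrite normrN; lra.
have := key (d / M).
have ht : d / M * M = d by rewrite divfK // gt_eqF.
set t := d / M.
move=> kt.
have k2 : 2 * d ^+ 2 * M + d ^+ 2 * q <= 0.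
  have : (2 * t * d + t ^+ 2 * q) * M ^+ 2 <= 0.
    by rewrite pmulr_lle0 // exprn_gt0.
  have -> : (2 * t * d + t ^+ 2 * q) * M ^+ 2 = 2 * (t * M) * d * M + (t * M) ^+ 2 * q by ring.
  rewrite ht => h; nra.
have hd : d ^+ 2 <= 0 by nra.
have : d = 0 by apply/eqP; rewrite -sqrf_eq0 eq_le hd sqr_ge0.
by rewrite /d => /eqP; rewrite subr_eq0 => /eqP.
Qed.

Lemma moveV (R : realType) (H : normedModType R) (ip : H -> H -> R) k
  (S : ('I_k -> H) -> R) : is_inner_product ip -> good S ->
  forall y, (forall i, `|y i| = 1) -> S y = 1 -> forall a b, a != b ->
  forall al be : R,
  S (upd (upd y a (al *: y a + be *: y b)) b (al *: y b + be *: y a)) =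
  ip (al *: y a + be *: y b) (al *: y a + be *: y b).
Proof.
move=> hip gS y hy Sy a b ab al be.
have ml := gS.1; have sy := gS.2.1.
set w := al *: y a + be *: y b.
rewrite (mlD ml) !(mlZ ml).
have -> : upd (upd y a w) b (y b) = upd y a w.
  by rewrite -{2}(upd_id (upd y a w) b) upd_neq // eq_sym.
rewrite (Flem hip gS hy Sy).
rewrite upd_comm // (mlD ml) !(mlZ ml).
have -> : upd (upd y b (y a)) a (y a) = upd y b (y a).
  by rewrite -{2}(upd_id (upd y b (y a)) a) upd_neq.
rewrite (Flem hip gS hy Sy).
have -> : upd (upd y b (y a)) a (y b) = (fun j => y (tperm a b j)).
  apply: funext => j; rewrite /upd.
  have [->|ja] := eqVneq j a; first by rewrite tpermL.
  have [->|jb] := eqVneq j b; first by rewrite tpermR.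
  by rewrite tpermD // eq_sym.
rewrite sy Sy.
rewrite /w (ipDl hip) !(ipZl hip) !(ipDr hip) !(ipZr hip).
rewrite (ipxx hip (y a)) (ipxx hip (y b)) !hy (ipC hip (y a) (y b)).
ring.
Qed.

Lemma trig1 (R : realType) (A B s : R) :
  sin (B - A) * cos (A + s) = sin (B - A - s) * cos A + sin s * cos B.
Proof.
rewrite !sinB cosB cosD.
apply/eqP; rewrite -subr_eq0; apply/eqP.
transitivity (sin s * cos B * ((cos A ^+ 2 + sin A ^+ 2) - 1)); first by ring.
by rewrite cos2Dsin2 subrr mulr0.
Qed.

Lemma trig2 (R : realType) (A B s : R) :
  sin (B - A) * sin (A + s) = sin (B - A - s) * sin A + sin s * sin B.
Proof.
rewrite !sinB cosB sinD.
apply/eqP; rewrite -subr_eq0; apply/eqP.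
transitivity (sin s * sin B * ((cos A ^+ 2 + sin A ^+ 2) - 1)); first by ring.
by rewrite cos2Dsin2 subrr mulr0.
Qed.

Definition ua (R : realType) (H : normedModType R) (e f : H) (t : R) : H :=
  cos t *: e + sin t *: f.

Definition orthon (R : realType) (H : normedModType R) (ip : H -> H -> R) (e f : H) :=
  ip e e = 1 /\ ip f f = 1 /\ ip e f = 0.

Lemma ip_ua (R : realType) (H : normedModType R) (ip : H -> H -> R) e f :
  is_inner_product ip -> orthon ip e f -> forall A B,
  ip (ua e f A) (ua e f B) = cos (A - B).
Proof.
move=> hip [ee [ff ef]] A B; rewrite /ua (ipDl hip) !(ipZl hip) !(ipDr hip) !(ipZr hip).
by rewrite ee ff ef (ipC hip f e) ef cosB; ring.
Qed.

Lemma norm_ua (R : realType) (H : normedModType R) (ip : H -> H -> R) e f :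
  is_inner_product ip -> orthon ip e f -> forall A, `|ua e f A| = 1.
Proof.
move=> hip ho A; have := ip_ua hip ho A A; rewrite subrr cos0 (ipxx hip).
by move/eqP; rewrite sqrp_eq1 // => /eqP.
Qed.

Lemma ua_comb (R : realType) (H : normedModType R) (e f : H) (A B s : R) :
  sin (B - A) *: ua e f (A + s) = sin (B - A - s) *: ua e f A + sin s *: ua e f B.
Proof.
rewrite /ua !scalerDr !scalerA trig1 trig2 !scalerDl.
by rewrite addrACA.
Qed.

Lemma moveA (R : realType) (H : normedModType R) (ip : H -> H -> R) e f k
  (S : ('I_k -> H) -> R) : is_inner_product ip -> orthon ip e f -> good S ->
  forall th : 'I_k -> R, S (fun i => ua e f (th i)) = 1 ->
  forall a b, a != b -> sin (th b - th a) != 0 -> forall s,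
  S (fun i => ua e f (upd (upd th a (th a + s)) b (th b - s) i)) = 1.
Proof.
move=> hip ho gS th N a b ab hD s.
set y := fun i => ua e f (th i).
have hy : forall i, `|y i| = 1 by move=> i; exact: norm_ua hip ho _.
set D := sin (th b - th a).
set al := sin (th b - th a - s) / D; set be := sin s / D.
have e1 : ua e f (th a + s) = al *: y a + be *: y b.
  apply: (@scalerI _ _ D) => //.
  by rewrite ua_comb [RHS]scalerDr !scalerA /al /be ![D * _]mulrC !divfK.
have e2 : ua e f (th b - s) = al *: y b + be *: y a.
  apply: (@scalerI _ _ (- D)); first by rewrite oppr_eq0.
  have := ua_comb e f (th b) (th a) (- s).
  have -> : th a - th b = - (th b - th a) by rewrite opprB.
  have -> : - (th b - th a) - - s = - (th b - th a - s) by rewrite opprB opprK; ring.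
  rewrite !sinN -/D => ->.
  rewrite [RHS]scalerDr !scalerA /al /be ![- D * _]mulrC !mulrN !divfK //.
have -> : (fun i => ua e f (upd (upd th a (th a + s)) b (th b - s) i)) =
   upd (upd y a (ua e f (th a + s))) b (ua e f (th b - s)).
  by apply: funext => i; rewrite /upd; case: (i == b); case: (i == a).
rewrite e1 e2 (moveV hip gS hy N ab) -e1 (ipxx hip).
by rewrite (norm_ua hip ho) expr1n.
Qed.

Lemma sum_upd (R : realType) k (th : 'I_k -> R) a x :
  \sum_i upd th a x i = \sum_i th i + (x - th a).
Proof.
rewrite (bigD1 a) //= [in RHS](bigD1 a) //= upd_eq.
rewrite (eq_bigr (fun i => th i)); last by move=> i ia; rewrite upd_neq.
ring.
Qed.

Lemma sum_move (R : realType) k (th : 'I_k -> R) a b s : a != b ->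
  \sum_i upd (upd th a (th a + s)) b (th b - s) i = \sum_i th i.
Proof.
move=> ab; rewrite sum_upd sum_upd upd_neq 1?eq_sym //.
ring.
Qed.

Lemma kill1 (R : realType) (d x y : R) :
  sin (d + x) = 0 -> sin (d + y) = 0 -> sin (y - x) = 0.
Proof.
move=> h1 h2; have -> : y - x = (d + y) - (d + x) by ring.
by rewrite sinB h1 h2 !mulr0 mul0r subrr.
Qed.

Lemma sin_pos (R : realType) (x : R) : 0 < x < pi -> sin x != 0.
Proof. by move=> h; rewrite gt_eqF // sin_gt0_pi. Qed.

Lemma pick2 (R : realType) (d1 d2 : R) :
  exists v, sin (d1 + v) != 0 /\ sin (d2 + v) != 0.
Proof.
have hp := @pi_gt0 R.
have q1 : sin (pi / 3 - 0) != 0 :> R by apply: sin_pos; rewrite subr0; apply/andP; split; lra.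
have q2 : sin (pi / 3 * 2 - 0) != 0 :> R by apply: sin_pos; rewrite subr0; apply/andP; split; lra.
have q3 : sin (pi / 3 * 2 - pi / 3) != 0 :> R.
  by apply: sin_pos; apply/andP; split; lra.
case: (pselect (exists v, sin (d1 + v) != 0 /\ sin (d2 + v) != 0)) => // hn.
exfalso.
have hall : forall v, sin (d1 + v) = 0 \/ sin (d2 + v) = 0.
  move=> v; have [e1|e1] := eqVneq (sin (d1 + v)) 0; first by left.
  have [e2|e2] := eqVneq (sin (d2 + v)) 0; first by right.
  by exfalso; apply: hn; exists v.
case: (hall 0) (hall (pi / 3)) (hall (pi / 3 * 2)) => [h0|h0] [h1|h1] [h2|h2];
 first [ by have := kill1 h0 h1; move/eqP; rewrite (negbTE q1)
       | by have := kill1 h0 h2; move/eqP; rewrite (negbTE q2)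
       | by have := kill1 h1 h2; move/eqP; rewrite (negbTE q3) ].
Qed.

Lemma sin_quarter (R : realType) (c : nat) :
  sin (pi / 4 - c%:R * (pi / 2)) != 0 :> R.
Proof.
have hp := @pi_gt0 R.
suff : sin ((pi : R) / 4 - c%:R * (pi / 2)) != 0 /\ cos ((pi : R) / 4 - c%:R * (pi / 2)) != 0.
  by case.
elim: c => [|c [IH1 IH2]].
  rewrite mul0r subr0; split; rewrite gt_eqF //.
    by apply: sin_gt0_pi; apply/andP; split; lra.
  by apply: cos_gt0_pihalf; apply/andP; split; lra.
have -> : pi / 4 - c.+1%:R * (pi / 2) = (pi / 4 - c%:R * (pi / 2)) - pi / 2 :> R.
  by rewrite -addn1 natrD; ring.
by rewrite sinBpihalf cosBpihalf oppr_eq0.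
Qed.

Lemma sin_half (R : realType) (x v : R) : sin (2 * x + v) != 0 -> sin (x + v / 2) != 0.
Proof.
have -> : 2 * x + v = (x + v / 2) *+ 2 by rewrite mulr2n; field.
by rewrite sin_mulr2n; apply: contra => /eqP ->; rewrite mulr0 mul0rn.
Qed.

Lemma reach1 (R : realType) (H : normedModType R) (ip : H -> H -> R) e f n
  (S : ('I_n.+2 -> H) -> R) : is_inner_product ip -> orthon ip e f -> good S ->
  forall th : 'I_n.+2 -> R, S (fun i => ua e f (th i)) = 1 ->
  forall a : 'I_n.+2, a != ord_max -> sin (th ord_max - th a) != 0 ->
  forall psi : R, exists phi : 'I_n.+2 -> R,
   [/\ S (fun i => ua e f (phi i)) = 1, \sum_i phi i = \sum_i th i &
       forall i, i != ord_max -> phi i = psi].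
Proof.
move=> hip ho gS th Nth a al hs psi.
set last := @ord_max n.+1.
have inv : forall m : nat, exists phi : 'I_n.+2 -> R,
   [/\ S (fun i => ua e f (phi i)) = 1, \sum_i phi i = \sum_i th i,
       sin (phi last - phi a) != 0 &
       forall i : 'I_n.+2, (i < m)%N -> i != a -> i != last -> phi i = psi].
  elim => [|m [phi [N1 S1 D1 P1]]]; first by exists th; split.
  have keep : (forall i : 'I_n.+2, (i < m.+1)%N -> i != a -> i != last -> (i < m)%N \/ val i = m).
    by move=> i; rewrite ltnS leq_eqVlt => /orP [/eqP h|h] _ _; [right|left].
  case: (ltnP m n.+2) => hm; last first.
    exists phi; split => // i im ia il; apply: P1 => //.
    by apply: leq_trans (ltn_ord i) hm.
  set i0 := Ordinal hm.
  have same : (i0 == a) || (i0 == last) -> exists phi : 'I_n.+2 -> R,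
   [/\ S (fun i => ua e f (phi i)) = 1, \sum_i phi i = \sum_i th i,
       sin (phi last - phi a) != 0 &
       forall i : 'I_n.+2, (i < m.+1)%N -> i != a -> i != last -> phi i = psi].
    move=> h; exists phi; split => // i im ia il.
    case: (keep i im ia il) => [hh|iv]; first exact: P1.
    have : i = i0 by apply: val_inj.
    by move=> ei; move: h; rewrite -ei (negbTE ia) (negbTE il).
  have [ia|ia] := eqVneq i0 a; first by apply: same; rewrite ia eqxx.
  have [il|il] := eqVneq i0 last; first by apply: same; rewrite il eqxx orbT.
  have al' : a != last by [].
  have [v [v1 v2]] := pick2 (2 * (phi last - phi i0)) (phi last - psi + phi i0 - phi a).
  set s1 := - v / 2.
  have N2 := moveA hip ho gS N1 al' D1 s1.
  set phi1 := upd (upd phi a (phi a + s1)) last (phi last - s1) in N2.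
  have e1l : phi1 last = phi last - s1 by rewrite /phi1 upd_eq.
  have e1a : phi1 a = phi a + s1 by rewrite /phi1 upd_neq // upd_eq.
  have e1o : forall i, i != a -> i != last -> phi1 i = phi i.
    by move=> i h1 h2; rewrite /phi1 !upd_neq.
  have D2 : sin (phi1 last - phi1 i0) != 0.
    rewrite e1l e1o //.
    have -> : phi last - s1 - phi i0 = (phi last - phi i0) + v / 2 by rewrite /s1; ring.
    exact: sin_half.
  set s2 := psi - phi1 i0.
  have N3 := moveA hip ho gS N2 il D2 s2.
  set phi2 := upd (upd phi1 i0 (phi1 i0 + s2)) last (phi1 last - s2) in N3.
  exists phi2; split => //.
  - by rewrite /phi2 sum_move // /phi1 sum_move.
  - rewrite /phi2 upd_eq upd_neq // upd_neq 1?eq_sym // e1a e1l /s2 e1o //.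
    have -> : phi last - s1 - (psi - phi i0) - (phi a + s1) =
       (phi last - psi + phi i0 - phi a) + v by rewrite /s1; field.
    by rewrite eq_sym.
  - move=> i im ia' il'.
    rewrite /phi2 upd_neq //.
    case: (keep i im ia' il') => [iv|iv].
      have ii0 : i != i0 by apply/eqP => ei; move: iv; rewrite ei /= ltnn.
      by rewrite upd_neq // e1o // P1.
    have -> : i = i0 by apply: val_inj.
    by rewrite upd_eq /s2 addrC subrK.
have [phi [N1 S1 D1 P1]] := inv n.+2.
have al' : a != last by [].
have N2 := moveA hip ho gS N1 al' D1 (psi - phi a).
exists (upd (upd phi a (phi a + (psi - phi a))) last (phi last - (psi - phi a))).
split => //; first by rewrite sum_move.
move=> i il; rewrite upd_neq //.
have [->|ia] := eqVneq i a; first by rewrite upd_eq addrC subrK.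
by rewrite upd_neq // P1.
Qed.

Lemma reach2 (R : realType) (H : normedModType R) (ip : H -> H -> R) e f n
  (S : ('I_n.+2 -> H) -> R) : is_inner_product ip -> orthon ip e f -> good S ->
  forall (phi0 : 'I_n.+2 -> R) (psi : R), S (fun i => ua e f (phi0 i)) = 1 ->
  (forall i, i != ord_max -> phi0 i = psi) -> phi0 ord_max = psi + pi / 4 ->
  forall b : 'I_n.+2 -> bool, exists phi : 'I_n.+2 -> R,
   [/\ S (fun i => ua e f (phi i)) = 1, \sum_i phi i = \sum_i phi0 i &
       forall i, i != ord_max -> phi i = if b i then psi + pi / 2 else psi].
Proof.
move=> hip ho gS phi0 psi N0 P0 L0 b.
set last := @ord_max n.+1.
have inv : forall m : nat, exists (phi : 'I_n.+2 -> R) (c : nat),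
   [/\ S (fun i => ua e f (phi i)) = 1, \sum_i phi i = \sum_i phi0 i,
       phi last = psi + pi / 4 - c%:R * (pi / 2) &
       forall i : 'I_n.+2, i != last ->
         phi i = if b i && (i < m)%N then psi + pi / 2 else psi].
  elim => [|m [phi [c [N1 S1 L1 P1]]]].
    exists phi0, 0%N; split => //; first by rewrite mul0r subr0.
    by move=> i il; rewrite andbF P0.
  have keep : forall i : 'I_n.+2, val i != m -> (i < m.+1)%N = (i < m)%N.
    by move=> i im; rewrite ltnS leq_eqVlt (negbTE im).
  case: (ltnP m n.+2) => hm; last first.
    exists phi, c; split => // i il; rewrite P1 // keep //.
    by apply/eqP => im; move: (ltn_ord i); rewrite im ltnNge hm.
  set i0 := Ordinal hm.
  have [bil|bil] := boolP (b i0 && (i0 != last)); last first.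
    exists phi, c; split => // i il; rewrite P1 //.
    have [iv|iv] := eqVneq (val i) m; last by rewrite keep.
    have ei : i = i0 by apply: val_inj.
    move: bil; rewrite -ei il andbT => /negbTE ->; done.
  move/andP: bil => [bi il0].
  have D : sin (phi last - phi i0) != 0.
    rewrite L1 P1 // ltnn andbF.
    have -> : psi + pi / 4 - c%:R * (pi / 2) - psi = pi / 4 - c%:R * (pi / 2) by ring.
    exact: sin_quarter.
  have N2 := moveA hip ho gS N1 il0 D (pi / 2).
  exists (upd (upd phi i0 (phi i0 + pi / 2)) last (phi last - pi / 2)), c.+1.
  split => //; first by rewrite sum_move.
    by rewrite upd_eq L1 -addn1 natrD; ring.
  move=> i il; rewrite upd_neq //.
  have [iv|iv] := eqVneq (val i) m.
    have -> : i = i0 by apply: val_inj.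
    rewrite upd_eq P1 // ltnn andbF bi /= ltnSn.
    done.
  have ii0 : i != i0 by apply/eqP => ei; move: iv; rewrite ei eqxx.
  by rewrite upd_neq // P1 // keep.
have [phi [c [N1 S1 L1 P1]]] := inv n.+2.
exists phi; split => // i il; rewrite P1 // ltn_ord andbT.
done.
Qed.

Lemma sum_last (R : realType) n (phi : 'I_n.+2 -> R) psi :
  (forall i, i != ord_max -> phi i = psi) ->
  \sum_i phi i = n.+1%:R * psi + phi ord_max.
Proof.
move=> P; rewrite big_ord_recr /=; congr (_ + _).
rewrite (eq_bigr (fun _ => psi)); last first.
  move=> i _; apply: P; apply/eqP => /(congr1 val) /=.
  by move=> h; move: (ltn_ord i); rewrite h ltnn.
by rewrite sumr_const card_ord mulr_natl.
Qed.

Lemma uniq_last (R : realType) n (phi phi' : 'I_n.+2 -> R) :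
  (forall i, i != ord_max -> phi i = phi' i) -> \sum_i phi i = \sum_i phi' i ->
  phi = phi'.
Proof.
move=> P hs.
have e : phi = upd phi' ord_max (phi ord_max).
  apply: funext => i; rewrite /upd; case: eqP => [->//|/eqP h]; exact: P.
move: hs; rewrite {1}e sum_upd => h.
have h2 : phi ord_max - phi' ord_max = 0 by move: h; set s := \sum_i _; move=> h; lra.
rewrite e; apply: funext => i; rewrite /upd; case: eqP => [->|//].
by apply/eqP; rewrite -subr_eq0 h2.
Qed.

Lemma reach_all (R : realType) (H : normedModType R) (ip : H -> H -> R) e f n
  (S : ('I_n.+2 -> H) -> R) : is_inner_product ip -> orthon ip e f -> good S ->
  forall th : 'I_n.+2 -> R, S (fun i => ua e f (th i)) = 1 ->
  forall a : 'I_n.+2, a != ord_max -> sin (th ord_max - th a) != 0 ->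
  forall psi : R, n.+2%:R * psi = \sum_i th i - pi / 4 ->
  forall b : 'I_n.+2 -> bool, exists phi : 'I_n.+2 -> R,
   [/\ S (fun i => ua e f (phi i)) = 1, \sum_i phi i = \sum_i th i &
       forall i, i != ord_max -> phi i = if b i then psi + pi / 2 else psi].
Proof.
move=> hip ho gS th N a al hs psi hpsi b.
have [phi0 [N0 S0 P0]] := reach1 hip ho gS N al hs psi.
have L0 : phi0 ord_max = psi + pi / 4.
  have := sum_last P0; rewrite S0 => h.
  have : n.+2%:R * psi = n.+1%:R * psi + psi by rewrite -addn1 natrD; ring.
  lra.
have [phi [N1 S1 P1]] := reach2 hip ho gS N0 P0 L0 b.
by exists phi; split => //; rewrite S1.
Qed.

Lemma expand (R : realType) (H : normedModType R) k (S T : ('I_k -> H) -> R) :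
  Defs.multilinear S -> Defs.multilinear T -> forall (p q : H) (l : 'I_k),
  (forall (b : 'I_k -> bool) v, S (upd (fun i => if b i then q else p) l v) =
                                T (upd (fun i => if b i then q else p) l v)) ->
  forall w : 'I_k -> H, (forall i, exists al be : R, w i = al *: p + be *: q) -> S w = T w.
Proof.
move=> mS mT p q l hb.
suff Q : forall m w, (forall i, exists al be : R, w i = al *: p + be *: q) ->
   (forall i : 'I_k, (m <= i)%N -> i != l -> w i = p \/ w i = q) -> S w = T w.
  move=> w hw; apply: (Q k) => // i; by rewrite leqNgt ltn_ord.
elim => [|m IH] w hw hbw.
  have -> : w = upd (fun i => if w i == q then q else p) l (w l).
    apply: funext => i; rewrite /upd; case: eqP => [->//|/eqP il].
    by case: (hbw i (leq0n _) il) => ->; case: eqP.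
  exact: hb.
case: (ltnP m k) => hm; last first.
  apply: IH => // i mi il; move: (ltn_ord i); rewrite ltnNge.
  by rewrite (leq_trans hm mi).
set i0 := Ordinal hm.
have [il|il] := eqVneq i0 l.
  apply: IH => // i mi il'; apply: hbw => //.
  rewrite ltn_neqAle mi andbT; apply/eqP => ei.
  have ei' : i = i0 by apply: val_inj; rewrite /= ei.
  by move: il'; rewrite -il ei' eqxx.
have [al [be hw0]] := hw i0.
have ew : w = upd w i0 (al *: p + be *: q) by rewrite -hw0 upd_id.
have cond : forall u, (u = p \/ u = q) ->
    S (upd w i0 u) = T (upd w i0 u).
  move=> u hu; apply: IH.
    move=> i; rewrite /upd; case: eqP => _; last exact: hw.
    by case: hu => ->; [exists 1, 0 | exists 0, 1]; rewrite !scale1r !scale0r ?addr0 ?add0r.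
  move=> i mi il'; rewrite /upd; case: eqP => [//|/eqP ii0].
  apply: hbw => //; rewrite ltn_neqAle mi andbT; apply/eqP => ei.
  have ei' : i = i0 by apply: val_inj; rewrite /= ei.
  by move: ii0; rewrite ei' eqxx.
rewrite ew !(mlD mS) !(mlD mT) !(mlZ mS) !(mlZ mT).
rewrite !cond //; by [right|left].
Qed.

Lemma ip_unit (R : realType) (H : normedModType R) (ip : H -> H -> R) :
  is_inner_product ip -> forall z : H, z != 0 ->
  ip (`|z|^-1 *: z) (`|z|^-1 *: z) = 1.
Proof.
move=> hip z z0; rewrite (ipZl hip) (ipZr hip) (ipxx hip).
have nz : `|z| != 0 by rewrite normr_eq0.
by field.
Qed.

Lemma ortho_basis (R : realType) (H : normedModType R) (ip : H -> H -> R) :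
  is_inner_product ip -> forall u v : H,
  (forall a b : R, a *: u + b *: v = 0 -> a = 0 /\ b = 0) ->
  exists e f : H, orthon ip e f /\
   forall a b : R, exists al be : R, a *: u + b *: v = al *: e + be *: f.
Proof.
move=> hip u v ind.
have u0 : u != 0.
  apply/eqP => u0; have := ind 1 0; rewrite u0 scaler0 scale0r addr0 => /(_ erefl).
  by case=> /eqP; rewrite oner_eq0.
have nu : `|u| != 0 by rewrite normr_eq0.
set e := `|u|^-1 *: u.
set g := v - ip e v *: e.
have g0 : g != 0.
  apply/eqP => g0.
  have := ind (- (ip e v * `|u|^-1)) 1.
  have -> : - (ip e v * `|u|^-1) *: u + 1 *: v = g.
    by rewrite /g /e scale1r scalerA scaleNr addrC.
  by rewrite g0 => /(_ erefl) [_ /eqP]; rewrite oner_eq0.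
have ng : `|g| != 0 by rewrite normr_eq0.
set f := `|g|^-1 *: g.
have ee : ip e e = 1 by exact: ip_unit.
exists e, f; split.
  split => //; split; first exact: ip_unit.
  rewrite /f (ipZr hip) /g (ipDr hip).
  have -> : ip e (- (ip e v *: e)) = - (ip e v) * ip e e.
    by rewrite -scaleNr (ipZr hip).
  by rewrite ee; ring.
have eu : u = `|u| *: e by rewrite /e scalerA divff // scale1r.
have eg : g = `|g| *: f by rewrite /f scalerA divff // scale1r.
have ev : v = `|g| *: f + ip e v *: e by rewrite -eg /g subrK.
move=> a b; exists (a * `|u| + b * ip e v), (b * `|g|).
rewrite {1}eu {1}ev scalerDr !scalerA mulrDl scalerDl.
by rewrite addrCA addrC.
Qed.

Lemma ua_line (R : realType) (H : normedModType R) (e f : H) (A B : R) :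
  sin (B - A) = 0 -> ua e f A = cos (A - B) *: ua e f B.
Proof.
move=> h; rewrite /ua scalerDr !scalerA; congr (_ *: e + _ *: f).
  transitivity (cos (A - B) * cos B + sin B * sin (B - A) - cos A * (cos B ^+ 2 + sin B ^+ 2 - 1)).
    by rewrite cosB sinB; ring.
  by rewrite h cos2Dsin2; ring.
transitivity (cos (A - B) * sin B - cos B * sin (B - A) - sin A * (cos B ^+ 2 + sin B ^+ 2 - 1)).
  by rewrite cosB sinB; ring.
by rewrite h cos2Dsin2; ring.
Qed.

Lemma polar (R : realType) (al be : R) : al ^+ 2 + be ^+ 2 = 1 ->
  exists t, cos t = al /\ sin t = be.
Proof.
move=> h.
have ha : -1 <= al <= 1 by apply/andP; split; nra.
have c0 : cos (acos al) = al by apply: acosK; rewrite in_itv /=.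
have s0 : sin (acos al) = `|be|.
  rewrite sin_acos // -sqrtr_sqr; congr Num.sqrt; lra.
have [hb|hb] := lerP 0 be.
  by exists (acos al); rewrite c0 s0 ger0_norm.
by exists (- acos al); rewrite cosN sinN c0 s0 ltr0_norm // opprK.
Qed.

Lemma unit_coords (R : realType) (H : normedModType R) (ip : H -> H -> R) e f :
  is_inner_product ip -> orthon ip e f -> forall al be : R,
  `|al *: e + be *: f| = 1 -> al ^+ 2 + be ^+ 2 = 1.
Proof.
move=> hip [ee [ff ef]] al be h.
have := ipxx hip (al *: e + be *: f); rewrite h expr1n => <-.
rewrite (ipDl hip) !(ipDr hip) !(ipZl hip) !(ipZr hip) ee ff ef (ipC hip f e) ef.
by ring.
Qed.

Lemma change_basis (R : realType) (H : normedModType R) (e f : H) (psi al be : R) :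
  al *: e + be *: f = (al * cos psi + be * sin psi) *: ua e f psi +
     (be * cos psi - al * sin psi) *: ua e f (psi + pi / 2).
Proof.
rewrite /ua cosDpihalf sinDpihalf !scalerDr !scalerA addrACA -!scalerDl.
congr (_ *: e + _ *: f).
  by rewrite -{1}(mulr1 al) -(cos2Dsin2 psi); ring.
by rewrite -{1}(mulr1 be) -(cos2Dsin2 psi); ring.
Qed.

Unset Implicit Arguments.

Theorem lemma1p6 (R : realType) (H : completeNormedModType R)
  (ip : H -> H -> R) (hip : is_inner_product ip)
  (k : nat) (hk : (2 <= k)%N) (x : 'I_k -> H)
  (hx : forall i, `|x i| = 1)
  (hdim : dim_eq2 (span_fam x))
  (S T : ('I_k -> H) -> R) (hS : Ls S) (hT : Ls T)
  (nS : form_norm S = 1) (nT : form_norm T = 1)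
  (Sx : S x = 1) (Tx : T x = 1) :
  forall w : 'I_k -> H, (forall i, span_fam x (w i)) -> S w = T w.
Proof.
move: x hx hdim S T hS hT nS nT Sx Tx.
case: k hk => [|[|n]] // _ x hx hdim S T hS hT nS nT Sx Tx.
have gS := good_of hS nS; have gT := good_of hT nT.
have [u [v [ind hV]]] := hdim.
have [e [f [ho hef]]] := ortho_basis hip ind.
have span_ef : forall w, span_fam x w -> exists al be : R, w = al *: e + be *: f.
  by move=> w; rewrite hV => -[a [b ->]]; exact: hef.
have xi_span : forall i, span_fam x (x i).
  move=> i; exists (fun j => (j == i)%:R).
  rewrite (bigD1 i) //= eqxx scale1r big1 ?addr0 // => j /negbTE ->.
  by rewrite scale0r.
have polar_x : forall i, exists t, x i = ua e f t.
  move=> i; have [al [be exi]] := span_ef _ (xi_span i).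
  have := hx i; rewrite exi => /(unit_coords hip ho) /polar [t [ct st]].
  by exists t; rewrite /ua ct st.
case: (choice polar_x) => th hth.
have xth : x = (fun i => ua e f (th i)) by apply: funext.
have NthS : S (fun i => ua e f (th i)) = 1 by rewrite -xth.
have NthT : T (fun i => ua e f (th i)) = 1 by rewrite -xth.
set last := @ord_max n.+1.
have [a [al hs]] : exists a, a != last /\ sin (th last - th a) != 0.
  case: (pselect (exists a, a != last /\ sin (th last - th a) != 0)) => // hn.
  exfalso.
  have deg : forall a, x a = cos (th a - th last) *: x last.
    move=> a; have [->|al] := eqVneq a last; first by rewrite subrr cos0 scale1r.
    rewrite !hth; apply: ua_line.
    have [//|hs] := eqVneq (sin (th last - th a)) 0.
    by exfalso; apply: hn; exists a.
  have line : forall w, span_fam x w -> exists l : R, w = l *: x last.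
    move=> w [c ->]; exists (\sum_i c i * cos (th i - th last)).
    rewrite scaler_suml; apply: eq_bigr => i _.
    by rewrite deg scalerA.
  have [lu eu] : exists l : R, u = l *: x last.
    by apply: line; rewrite hV; exists 1, 0; rewrite scale1r scale0r addr0.
  have [lv ev] : exists l : R, v = l *: x last.
    by apply: line; rewrite hV; exists 0, 1; rewrite scale1r scale0r add0r.
  have := ind lv (- lu); rewrite eu ev !scalerA mulNr scaleNr (mulrC lu) subrr => /(_ erefl).
  case=> lv0 lu0.
  have lu' : lu = 0 by rewrite -(opprK lu) lu0 oppr0.
  have := ind 1 0; rewrite eu lu' !scale0r scaler0 addr0.
  by case=> // /eqP; rewrite oner_eq0.
set psi := (\sum_i th i - pi / 4) / n.+2%:R.
have hpsi : n.+2%:R * psi = \sum_i th i - pi / 4.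
  rewrite /psi mulrC divfK // pnatr_eq0 //.
set p := ua e f psi; set q := ua e f (psi + pi / 2).
have hu : forall phi : 'I_n.+2 -> R, forall i, `|ua e f (phi i)| = 1.
  by move=> phi i; apply: (norm_ua hip ho).
move=> w hw.
apply: (expand gS.1 gT.1 (p := p) (q := q) (l := last)); last first.
  move=> i; have [al' [be' ->]] := span_ef _ (hw i).
  by exists (al' * cos psi + be' * sin psi), (be' * cos psi - al' * sin psi);
    rewrite (change_basis e f psi).
move=> b v0.
have [phS [N1 S1 P1]] := reach_all hip ho gS NthS al hs hpsi b.
have [phT [N2 S2 P2]] := reach_all hip ho gT NthT al hs hpsi b.
have eST : phT = phS.
  by apply: uniq_last; [move=> i il; rewrite P1 // P2 | rewrite S1 S2].
have eY : forall ph : 'I_n.+2 -> R,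
   (forall i, i != ord_max -> ph i = if b i then psi + pi / 2 else psi) ->
   upd (fun i => if b i then q else p) last v0 = upd (fun i => ua e f (ph i)) last v0.
  move=> ph P; apply: funext => i; rewrite /upd; case: eqP => // /eqP il.
  by rewrite P //; case: (b i).
rewrite (eY _ P1) (Flem hip gS (hu phS) N1).
rewrite -eST in N2 *.
by rewrite (Flem hip gT (hu phT) N2).
Qed.
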